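(* Let $k\ge 3$ be an integer and let $G=(G_1,v_1,e_1)\Delta(G_2,v_2,e_2)$ be a Hajós join of two hypergraphs $G_1$ and $G_2$. Then $G\in\mathcal{C}_k$ if and only if both $G_1\in\mathcal{C}_k$ and $G_2\in\mathcal{C}_k$.
   Context: A hypergraph is a pair $G=(V,E)$ of finite sets with $E\subseteq 2^V$ and $|e|\ge2$ for all $e\in E$. A coloring requires every edge to contain two vertices of different colors; $\chi$ is the chromatic number. $G$ is $(k+1)$-critical if $\chi(G)=k+1$ but $\chi(H)\le k$ for every proper subhypergraph $H$. A $(v,w)$-hyperpath is a sequence $(v_1,e_1,\dots,e_{q-1},v_q)$ of distinct vertices and distinct edges with $v_1=v,v_q=w$, $\{v_i,v_{i+1}\}\subseteq e_i$; $\lambda_G(v,w)$ is the maximum number of pairwise edge-disjoint $(v,w)$-hyperpaths and $\lambda(G)=\max_{v\ne w}\lambda_G(v,w)$. $\mathcal{C}_k$ is the class of $(k+1)$-critical hypergraphs $H$ with $\lambda(H)\le k$. Hajós join $(G_1,v_1,e_1)\Delta(G_2,v_2,e_2)$: for vertex-disjoint $G_1,G_2$, $e_i\in E(G_i)$, $v_i\in e_i$, delete $e_1,e_2$, identify $v_1,v_2$ into a new vertex $v^*$, and add a new edge $e^*$ equal to $(e_1\cup e_2)\setminus\{v_1,v_2\}$ or to $((e_1\cup e_2)\setminus\{v_1,v_2\})\cup\{v^*\}$. *)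

(* Defs.v *)
From mathcomp Require Import all_boot.
Set Implicit Arguments. Unset Strict Implicit. Unset Printing Implicit Defensive.

Section Hyper.
Variable T : finType.

Definition is_hypergraph (V : {set T}) (E : {set {set T}}) : Prop :=
  forall e, e \in E -> e \subset V /\ 2 <= #|e|.

Definition colorable (V : {set T}) (E : {set {set T}}) (k : nat) : Prop :=
  exists c : T -> nat, (forall x, x \in V -> c x < k) /\
    forall e, e \in E -> exists x y, [/\ x \in e, y \in e & c x <> c y].

Definition chi_is (V : {set T}) (E : {set {set T}}) (n : nat) : Prop :=
  colorable V E n /\ forall m, colorable V E m -> n <= m.

Definition proper_sub (V' : {set T}) (E' : {set {set T}})
    (V : {set T}) (E : {set {set T}}) : Prop :=
  [/\ is_hypergraph V' E', V' \subset V, E' \subset E & (V', E') <> (V, E)].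

Definition critical (V : {set T}) (E : {set {set T}}) (k : nat) : Prop :=
  chi_is V E k.+1 /\
  forall V' E', proper_sub V' E' V E -> exists m, chi_is V' E' m /\ m <= k.

(* (v,w)-hyperpath (v_1,e_1,...,e_{q-1},v_q), given by the vertex sequence
   vs = [v_1..v_q] and the edge sequence es = [e_1..e_{q-1}]. *)
Definition hyperpath (E : {set {set T}}) (v w : T)
    (vs : seq T) (es : seq {set T}) : Prop :=
  [/\ size vs = (size es).+1, head v vs = v, last v vs = w,
      uniq vs & uniq es] /\
  all (fun e => e \in E) es /\
      (forall i, i < size es ->
        (nth v vs i \in nth set0 es i) && (nth v vs i.+1 \in nth set0 es i)).

Definition disjoint_paths (E : {set {set T}}) (v w : T) (m : nat) : Prop :=
  exists P : seq (seq T * seq {set T}),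
    [/\ size P = m,
        forall p, p \in P -> hyperpath E v w p.1 p.2 &
        pairwise (fun p q => all (fun e => e \notin q.2) p.2) P].

(* lambda(V,E) <= k, where lambda = max_{v<>w} lambda(v,w) and lambda(v,w)
   is the maximum number of pairwise edge-disjoint (v,w)-hyperpaths. *)
Definition lambda_le (V : {set T}) (E : {set {set T}}) (k : nat) : Prop :=
  forall v w, v \in V -> w \in V -> v <> w ->
    forall m, disjoint_paths E v w m -> m <= k.

Definition in_Ck (k : nat) (V : {set T}) (E : {set {set T}}) : Prop :=
  critical V E k /\ lambda_le V E k.

(* Hajós join: v1 and v2 are identified into v* := v1 (v2 is renamed v1);
   b selects whether v* belongs to the new edge e*. *)
Definition merge (v1 v2 : T) (x : T) : T := if x == v2 then v1 else x.

Definition hajos_V (V1 V2 : {set T}) (v1 v2 : T) : {set T} :=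
  (V1 :|: V2) :\ v2.

Definition hajos_estar (e1 e2 : {set T}) (v1 v2 : T) (b : bool) : {set T} :=
  ((e1 :|: e2) :\: [set v1; v2]) :|: (if b then [set v1] else set0).

Definition hajos_E (E1 E2 : {set {set T}}) (v1 : T) (e1 : {set T})
    (v2 : T) (e2 : {set T}) (b : bool) : {set {set T}} :=
  (E1 :\ e1) :|: [set merge v1 v2 @: (e : {set T}) | e in E2 :\ e2]
    :|: [set hajos_estar e1 e2 v1 v2 b].

End Hyper.

(* Main.v *)
Require Import Defs.
From Stdlib Require Import Classical_Prop.
From mathcomp Require Import all_boot zify.
Set Implicit Arguments. Unset Strict Implicit. Unset Printing Implicit Defensive.

Section General.
Variable T : finType.
Implicit Types (V : {set T}) (E : {set {set T}}).

Definition nonmono (c : T -> nat) (e : {set T}) :=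
  exists x y, [/\ x \in e, y \in e & c x <> c y].

Lemma colorable_sub V E V' E' K :
  colorable V E K -> V' \subset V -> E' \subset E -> colorable V' E' K.
Proof.
move=> [c [hc he]] /subsetP sV /subsetP sE; exists c; split.
  by move=> x /sV; apply: hc.
by move=> e /sE; apply: he.
Qed.

Lemma colorable_mono V E K K' : K <= K' -> colorable V E K -> colorable V E K'.
Proof.
move=> le [c [hc he]]; exists c; split=> // x /hc; lia.
Qed.

Lemma chi_exists V E K : colorable V E K -> exists m, chi_is V E m /\ m <= K.
Proof.
elim: K => [|K IH] hK.
  by exists 0; split=> //; split.
case: (Classical_Prop.classic (colorable V E K)) => [hk|hk].
  by case: (IH hk) => m [h1 h2]; exists m; split=> //; lia.
exists K.+1; split=> //; split=> // m hm.
rewrite ltnNge; apply/negP=> le; apply: hk; exact: colorable_mono hm.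
Qed.

Lemma critical_iff V E k : critical V E k <->
  [/\ colorable V E k.+1, ~ colorable V E k &
      forall V' E', Defs.proper_sub V' E' V E -> colorable V' E' k].
Proof.
split.
  move=> [[h1 h2] h3]; split=> //.
    by move/h2; rewrite ltnn.
  move=> V' E' /h3 [m [[hm _] le]]; exact: colorable_mono hm.
move=> [h1 h2 h3]; split.
  split=> // m hm; rewrite ltnNge; apply/negP=> le; apply: h2.
  exact: colorable_mono hm.
by move=> V' E' /h3 /chi_exists.
Qed.

Definition sw (a b z : nat) := if z == a then b else if z == b then a else z.

Lemma swK a b : involutive (sw a b).
Proof.
move=> z; rewrite /sw.
case: (z =P a) => [->|za]; first by rewrite eqxx; case: (b =P a) => [->|] //.
case: (z =P b) => [->|zb]; first by rewrite eqxx.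
by move/eqP/negbTE: za => ->; move/eqP/negbTE: zb => ->.
Qed.

Lemma sw_inj a b : injective (sw a b).
Proof. exact: inv_inj (swK a b). Qed.

Lemma sw_lt a b z K : a < K -> b < K -> z < K -> sw a b z < K.
Proof. by rewrite /sw; case: ifP => // _; case: ifP. Qed.

Lemma swL a b : sw a b a = b.
Proof. by rewrite /sw eqxx. Qed.

Lemma swD a b z : z != a -> z != b -> sw a b z = z.
Proof. by rewrite /sw => /negbTE -> /negbTE ->. Qed.

Lemma nonmono_comp f c e : injective f -> nonmono c e -> nonmono (f \o c) e.
Proof.
move=> fi [x [y [hx hy hc]]]; exists x, y; split=> //= /fi; exact: hc.
Qed.

Lemma nonmono_other c e v : nonmono c e -> v \in e -> exists2 x, x \in e & c x <> c v.
Proof.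
move=> [x [y [hx hy hc]]] hv.
case: (c x =P c v) => [ex|nx]; last by exists x.
by exists y => // ey; apply: hc; rewrite ex ey.
Qed.

Lemma mono_all c e v : ~ nonmono c e -> v \in e -> forall x, x \in e -> c x = c v.
Proof.
move=> nm hv x hx; case: (c x =P c v) => // nx; case: nm; by exists x, v.
Qed.

Lemma exists_other (e : {set T}) v : 2 <= #|e| -> v \in e -> exists2 w, w \in e & w != v.
Proof.
move=> he hv; have : #|e :\ v| > 0 by rewrite (cardsD1 v e) hv in he; lia.
by move/card_gt0P => [w]; rewrite !inE => /andP [wv we]; exists w.
Qed.

Definition crel (S : pred {set T}) : rel T :=
  fun u v => [exists e : {set T}, [&& S e, u \in e & v \in e]].

Lemma crel_sym S : symmetric (crel S).
Proof.
move=> u v; apply/existsP/existsP => [] [e /and3P [h1 h2 h3]]; exists e; by rewrite h1 h2 h3.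
Qed.

Lemma crel1 (S : pred {set T}) e u v : S e -> u \in e -> v \in e -> connect (crel S) u v.
Proof. by move=> h1 h2 h3; apply: connect1; apply/existsP; exists e; rewrite h1 h2 h3. Qed.

Lemma connect_img (f : T -> T) (R R' : rel T) a b :
  (forall u v, R u v -> R' (f u) (f v)) -> connect R a b -> connect R' (f a) (f b).
Proof.
move=> hR /connectP [p pth ->]; elim: p a pth => [|x p IH] a //= /andP [h1 h2].
apply: connect_trans (IH _ h2); apply: connect1; exact: hR.
Qed.

Fixpoint hp (v : T) (vs : seq T) (es : seq {set T}) : bool :=
  match vs, es with
  | [::], [::] => true
  | w :: vs', f :: es' => [&& v \in f, w \in f & hp w vs' es']
  | _, _ => false
  end.

Lemma hp_size v vs es : hp v vs es -> size vs = size es.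
Proof.
elim: vs v es => [|w vs IH] v [|f es] //= /and3P [_ _ /IH ->] //.
Qed.

Lemma hp_nth x0 v vs es i : hp v vs es -> i < size es ->
  (nth x0 (v :: vs) i \in nth set0 es i) && (nth x0 (v :: vs) i.+1 \in nth set0 es i).
Proof.
elim: vs v es i => [|w vs IH] v [|f es] i //= /and3P [h1 h2 h3].
case: i => [|i] /=; first by rewrite h1 h2.
move=> lt; exact: (IH w es i h3 lt).
Qed.

Lemma hp_edge v vs es f : hp v vs es -> f \in es -> exists2 u, u \in vs & u \in f.
Proof.
elim: vs v es => [|w vs IH] v [|g es] //= /and3P [h1 h2 h3].
rewrite inE => /orP [/eqP ->|]; first by exists w; rewrite ?inE ?eqxx.
by move/(IH _ _ h3) => [u hu hf]; exists u; rewrite ?inE ?hu ?orbT.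
Qed.

Lemma hp_hyperpath E v vs es : hp v vs es -> uniq (v :: vs) -> uniq es ->
  all (fun e => e \in E) es -> hyperpath E v (last v vs) (v :: vs) es.
Proof.
move=> h u1 u2 a; split; first split=> //=; first by rewrite (hp_size h).
split=> // i lt; exact: hp_nth.
Qed.

Lemma last_idx (P : pred T) (a : T) p : has P p ->
  exists i, [/\ i < size p, P (nth a p i) & ~~ has P (drop i.+1 p)].
Proof.
elim: p => [|x p IH] //= /orP [hx|hp'].
  case hh: (has P p); last by exists 0; rewrite hx drop0 hh.
  by case: (IH hh) => i [h1 h2 h3]; exists i.+1.
by case: (IH hp') => i [h1 h2 h3]; exists i.+1.
Qed.

Lemma greedy (S : pred {set T}) n : forall a p, size p <= n -> path (crel S) a p ->
  a != last a p ->
  exists vs es, [/\ hp a vs es, last a vs = last a p, uniq (a :: vs), uniq es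
                  & all S es] /\ {subset vs <= p}.
Proof.
elim: n => [|n IH] a p.
  by case: p => //= _ _; rewrite eqxx.
case: p => [|x p0]; first by move=> _ _; rewrite /= eqxx.
set p := x :: p0 => sp pth ne.
have hh : has (crel S a) p by rewrite /= (pathP a pth 0).
case: (last_idx a hh) => i [lt hz nh].
set z := nth a p i; set q := drop i.+1 p.
have ep : p = take i p ++ z :: q by rewrite /z /q -drop_nth // cat_take_drop.
have pq : path (crel S) z q.
  by move: pth; rewrite ep cat_path => /andP [_ /= /andP [_ ->]].
have lq : last a p = last z q by rewrite ep last_cat.
have nq : forall u, u \in q -> crel S a u -> False.
  by move=> u uq ru; move/negP: nh; apply; apply/hasP; exists u.
case/existsP: hz => f /and3P [Sf af zf].
have zp : z \in p by apply: mem_nth.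
case: (z =P last a p) => [ez|nez].
  exists [:: z], [:: f]; split; [split|].
  - by rewrite /= af zf.
  - by rewrite /= ez.
  - rewrite /= inE andbT; apply/eqP => az; move: ne; by rewrite -ez -az eqxx.
  - by [].
  - by rewrite /= Sf.
  - by move=> u; rewrite inE => /eqP ->.
have szq : size q <= n by rewrite /q size_drop; move: sp lt; rewrite /=; lia.
have neq : z != last z q by rewrite -lq; apply/eqP.
case: (IH z q szq pq neq) => vs [es [[h1 h2 h3 h4 h5] hsub]].
have raa : crel S a a by apply/existsP; exists f; rewrite Sf af.
exists (z :: vs), (f :: es); split; [split|].
- by rewrite /= af zf h1.
- by rewrite lq -h2.
- rewrite cons_uniq h3 andbT inE negb_or; apply/andP; split.
    apply/eqP => az.
    case hq: q => [|y q']; first by move: neq; rewrite hq /= eqxx.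
    move: pq; rewrite hq /= => /andP [rzy _]; apply: (nq y); first by rewrite hq inE eqxx.
    by rewrite az.
  by apply/negP => /hsub aq; exact: (nq a aq raa).
- rewrite /= h4 andbT; apply/negP => /(hp_edge h1) [u uv uf].
  apply: (nq u (hsub u uv)); apply/existsP; exists f; by rewrite Sf af uf.
- by rewrite /= Sf h5.
- move=> u; rewrite inE => /orP [/eqP -> //|/hsub]; exact: mem_drop.
Qed.

Lemma path_of_connect E (S : pred {set T}) a b :
  (forall e, S e -> e \in E) -> connect (crel S) a b -> a != b ->
  exists vs es, hyperpath E a b vs es /\ all S es.
Proof.
move=> SE /connectP [p pth ->] ne.
case: (greedy (leqnn (size p)) pth ne) => vs [es [[h1 h2 h3 h4 h5] _]].
exists (a :: vs), es; split=> //; rewrite -h2; apply: hp_hyperpath => //.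
by apply/allP => e /(allP h5) /SE.
Qed.

Lemma hyperpath_conn E v w vs es (R : rel T) (pi : T -> T) :
  hyperpath E v w vs es ->
  (forall f, f \in es -> forall u u', u \in f -> u' \in f -> connect R (pi u) (pi u')) ->
  connect R (pi v) (pi w).
Proof.
move=> [[hs hh hl _ _] [_ hn]] hR.
have key : forall i, i <= size es -> connect R (pi v) (pi (nth v vs i)).
  elim=> [|i IH] lt.
    by case: vs hs hh {hl hn} => [|x vs] //= _ ->.
  apply: connect_trans (IH (ltnW lt)) _.
  have /andP [h1 h2] := hn i lt.
  apply: (hR (nth set0 es i)) => //; exact: mem_nth.
by have := key _ (leqnn _); rewrite -hl -nth_last hs.
Qed.


Section Transfer.
Variables (E E' : {set {set T}}) (pi : T -> T) (F : {set T} -> pred {set T}) (x y : T).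
Hypothesis FE : forall f, f \in E -> forall e, F f e -> e \in E'.
Hypothesis Fc : forall f, f \in E -> forall u u', u \in f -> u' \in f ->
  connect (crel (F f)) (pi u) (pi u').
Hypothesis Fd : forall f g e, f \in E -> g \in E -> f != g -> F f e -> F g e -> False.
Hypothesis nxy : pi x != pi y.

Local Notation Up p := (fun e : {set T} => has (fun f => F f e) p.2).
Definition Dp (p q : seq T * seq {set T}) := all (fun e => e \notin q.2) p.2.

Lemma transfer1 p : hyperpath E x y p.1 p.2 ->
  exists vs es, hyperpath E' (pi x) (pi y) vs es /\ all (Up p) es.
Proof.
move=> hpp; apply: path_of_connect => //.
  move=> e /hasP [f fp Ffe]; apply: (FE _ Ffe).
  by case: hpp => _ [/allP ha _]; apply: ha.
apply: (hyperpath_conn hpp) => f fp u u' hu hu'.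
have fE : f \in E by case: hpp => _ [/allP ha _]; apply: ha.
apply: connect_sub (Fc fE hu hu') => a a' /existsP [e /and3P [h1 h2 h3]].
apply: connect1; apply/existsP; exists e; rewrite h2 h3 !andbT.
by apply/hasP; exists f.
Qed.

Lemma transferP P : (forall p, p \in P -> hyperpath E x y p.1 p.2) -> pairwise Dp P ->
  exists P', [/\ size P' = size P, forall p', p' \in P' -> hyperpath E' (pi x) (pi y) p'.1 p'.2,
    pairwise Dp P' & forall p', p' \in P' -> exists2 p, p \in P & all (Up p) p'.2].
Proof.
elim: P => [|p P IH] hP; first by exists [::].
rewrite pairwise_cons => /andP [hall hpw].
have [P' [h1 h2 h3 h4]] : exists P', [/\ size P' = size P,
    forall p', p' \in P' -> hyperpath E' (pi x) (pi y) p'.1 p'.2,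
    pairwise Dp P' & forall p', p' \in P' -> exists2 p, p \in P & all (Up p) p'.2].
  by apply: IH => // q hq; apply: hP; rewrite inE hq orbT.
have hp0 := hP p (mem_head _ _).
case: (transfer1 hp0) => vs [es [hvs hes]].
exists ((vs, es) :: P'); split.
- by rewrite /= h1.
- by move=> p'; rewrite inE => /orP [/eqP -> //|]; apply: h2.
- rewrite pairwise_cons h3 andbT; apply/allP => q' /h4 [q qP hq].
  apply/allP => e /= ees; apply/negP => eq'.
  move/allP: hes => /(_ e ees) /hasP [f fp Ffe].
  move/allP: hq => /(_ e eq') /hasP [g gq Fge].
  have fE : f \in E by case: hp0 => _ [/allP ha _]; apply: ha.
  have gE : g \in E.
    by have := hP q; rewrite inE qP orbT => /(_ isT) [_ [/allP ha _]]; apply: ha.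
  apply: (Fd fE gE _ Ffe Fge); apply/eqP => efg.
  by move/allP: hall => /(_ q qP) /allP /(_ f fp); rewrite efg gq.
- move=> p'; rewrite inE => /orP [/eqP -> |/h4 [q qP hq]].
    by exists p; rewrite ?mem_head.
  by exists q; rewrite // inE qP orbT.
Qed.

Lemma transfer n : disjoint_paths E x y n -> disjoint_paths E' (pi x) (pi y) n.
Proof.
move=> [P [hs hh hpw]].
case: (transferP hh hpw) => P' [h1 h2 h3 _].
by exists P'; split=> //; rewrite h1.
Qed.
End Transfer.

Lemma conn_other V E e v K : is_hypergraph V E -> 2 <= K -> e \in E -> v \in e ->
  ~ colorable V E K -> colorable V (E :\ e) K ->
  exists2 y, (y \in e) && (y != v) & connect (crel (fun f => f \in E :\ e)) v y.
Proof.
move=> hyp K2 eE ve nc [c [hc hce]].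
case: (classic (exists2 y, (y \in e) && (y != v) &
   connect (crel (fun f => f \in E :\ e)) v y)) => // nconn.
exfalso; apply: (nc).
set R := crel (fun f => f \in E :\ e).
have [eV e2] := hyp e eE.
have vV : v \in V by apply: (subsetP eV).
have mono : ~ nonmono c e.
  move=> nm; apply: nc; exists c; split=> // f fE.
  case: (f =P e) => [->//|/eqP fe]; apply: hce; by rewrite !inE fe.
set g := if c v == 0 then 1 else 0.
have gK : g < K by rewrite /g; case: ifP => _; lia.
have gv : g != c v by rewrite /g; case: (c v =P 0) => [->|]; [|move=> /eqP; rewrite eq_sym].
exists (fun z => if connect R v z then sw (c v) g (c z) else c z); split.
  move=> z zV; case: ifP => _; last exact: hc.
  by apply: sw_lt; [apply: hc| |apply: hc].
move=> f fE; case: (f =P e) => [->|/eqP fe].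
  case: (exists_other e2 ve) => y ye yv.
  exists v, y; split=> //.
  rewrite connect0 swL; case: ifP => [cy|_].
    by case: nconn; exists y => //; rewrite ye yv.
  rewrite (mono_all mono ve ye); exact/eqP.
have fE' : f \in E :\ e by rewrite !inE fe.
case: (hce f fE') => x0 [y0 [hx hy hxy]].
have rxy : R x0 y0 by apply/existsP; exists f; rewrite fE' hx hy.
exists x0, y0; split=> //.
case cx: (connect R v x0).
  have -> : connect R v y0 by apply: connect_trans cx (connect1 rxy).
  by move/sw_inj.
case cy: (connect R v y0) => //.
have : connect R v x0 by apply: connect_trans cy (connect1 _); rewrite /R crel_sym.
by rewrite cx.
Qed.

Lemma crit_del V E k f : critical V E k -> is_hypergraph V E -> f \in E -> colorable V (E :\ f) k.
Proof.
move=> /critical_iff [_ _ h3] hyp fE; apply: h3; split.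
- by move=> e; rewrite !inE => /andP [_ /hyp].
- by [].
- exact: subD1set.
- by case=> /setP /(_ f); rewrite !inE eqxx fE.
Qed.

Lemma crit_cover V E k z : critical V E k -> is_hypergraph V E -> 0 < k -> z \in V ->
  exists2 f, f \in E & z \in f.
Proof.
move=> /critical_iff [_ nc h3] hyp k0 zV.
case: (classic (exists2 f, f \in E & z \in f)) => // nf; exfalso.
have : colorable (V :\ z) E k.
  apply: h3; split.
  - move=> e eE; have [eV e2] := hyp e eE; split=> //.
    apply/subsetP => w we; rewrite !inE (subsetP eV _ we) andbT.
    by apply/eqP => wz; apply: nf; exists e; rewrite -?wz.
  - exact: subD1set.
  - by [].
  - by case=> /setP /(_ z); rewrite !inE eqxx zV.
move=> [c [hc hce]]; apply: nc.
exists (fun w => if w == z then 0 else c w); split.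
  by move=> w wV; case: ifP => // /negbT wz; apply: hc; rewrite !inE wz.
move=> e eE; case: (hce e eE) => x [y [hx hy hxy]]; exists x, y; split=> //.
have nz : forall w, w \in e -> (w == z) = false.
  by move=> w we; apply/eqP => wz; apply: nf; exists e; rewrite -?wz.
by rewrite (nz x hx) (nz y hy).
Qed.

Lemma crit_other V E k e v : critical V E k -> is_hypergraph V E -> 2 <= k -> e \in E -> v \in e ->
  exists2 f, f \in E :\ e & v \in f.
Proof.
move=> cr hyp k2 eE ve.
case: (classic (exists2 f, f \in E :\ e & v \in f)) => // nf; exfalso.
have [c [hc hce]] := crit_del cr hyp eE.
move/critical_iff: cr => [_ nc _]; apply: nc.
have [eV e2] := hyp e eE.
case: (exists_other e2 ve) => w we wv.
have wV : w \in V by apply: (subsetP eV).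
set g := if c w == 0 then 1 else 0.
have gK : g < k by rewrite /g; case: ifP => _; lia.
have gw : g != c w by rewrite /g; case: (c w =P 0) => [->|]; [|move=> /eqP; rewrite eq_sym].
exists (fun z => if z == v then g else c z); split.
  by move=> z zV; case: ifP => // _; apply: hc.
move=> f fE; case: (f =P e) => [->|/eqP fe].
  exists v, w; split=> //; rewrite eqxx (negbTE wv); exact/eqP.
have fE' : f \in E :\ e by rewrite !inE fe.
case: (hce f fE') => x [y [hx hy hxy]]; exists x, y; split=> //.
have nz : forall u, u \in f -> (u == v) = false.
  by move=> u uf; apply/eqP => uv; apply: nf; exists f; rewrite -?uv.
by rewrite (nz x hx) (nz y hy).
Qed.

Lemma mem_imset_inv (U : finType) (g : U -> U) (S : {set U}) z :
  involutive g -> (z \in g @: S) = (g z \in S).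
Proof.
move=> gK; apply/imsetP/idP => [[x xS ->]|gz]; first by rewrite gK.
by exists (g z); rewrite ?gK.
Qed.

Lemma imset_inv (U : finType) (g : U -> U) (S : {set U}) :
  involutive g -> g @: (g @: S) = S.
Proof. by move=> gK; apply/setP => z; rewrite mem_imset_inv // mem_imset_inv // gK. Qed.

Definition imE (r : T -> T) (E : {set {set T}}) := [set r @: (e : {set T}) | e in E].

Section Iso.
Variables (r : T -> T) (rK : involutive r).

Lemma imset_invol : involutive (fun e : {set T} => r @: e).
Proof. by move=> e; rewrite imset_inv. Qed.

Lemma mem_imE E f : (f \in imE r E) = (r @: f \in E).
Proof. apply: mem_imset_inv; exact: imset_invol. Qed.

Lemma imEK E : imE r (imE r E) = E.
Proof. apply: imset_inv; exact: imset_invol. Qed.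

Lemma imVK V : r @: (r @: V) = V.
Proof. exact: imset_inv. Qed.

Lemma iso_hyp V E : is_hypergraph V E -> is_hypergraph (r @: V) (imE r E).
Proof.
move=> hyp f /imsetP [e eE ->]; have [eV e2] := hyp e eE; split.
  exact: imsetS.
by rewrite card_imset //; apply: inv_inj.
Qed.

Lemma iso_col V E K : colorable V E K -> colorable (r @: V) (imE r E) K.
Proof.
move=> [c [hc hce]]; exists (c \o r); split.
  by move=> x; rewrite mem_imset_inv //; apply: hc.
move=> f /imsetP [e eE ->]; case: (hce e eE) => x [y [hx hy hxy]].
by exists (r x), (r y); split; rewrite /= ?rK //; apply: imset_f.
Qed.

Lemma iso_proper V' E' V E : Defs.proper_sub V' E' (r @: V) (imE r E) ->
  Defs.proper_sub (r @: V') (imE r E') V E.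
Proof.
move=> [h1 h2 h3 h4]; split.
- exact: iso_hyp.
- by rewrite -(imVK V); apply: imsetS.
- by rewrite -(imEK E); apply: imsetS.
- case=> eV eE; apply: h4; by rewrite -eV -eE imVK imEK.
Qed.

Lemma iso_crit V E k : critical V E k -> critical (r @: V) (imE r E) k.
Proof.
move=> /critical_iff [h1 h2 h3]; apply/critical_iff; split.
- exact: iso_col.
- by move=> /iso_col; rewrite imVK imEK.
- move=> V' E' /iso_proper /h3 /iso_col; by rewrite imVK imEK.
Qed.

Lemma iso_lambda V E k : lambda_le V E k -> lambda_le (r @: V) (imE r E) k.
Proof.
move=> hl x y xV yV nxy n hd.
have := @transfer (imE r E) E r (fun f e => e == r @: f) x y _ _ _ _ n hd.
move=> /(_ _ _ _ _) hd'; apply: (hl (r x) (r y)).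
- by rewrite -mem_imset_inv.
- by rewrite -mem_imset_inv.
- by move/(inv_inj rK).
apply: hd'.
- by move=> f; rewrite mem_imE => fE e /eqP ->.
- by move=> f fE u u' hu hu'; apply: (crel1 (e := r @: f)) => //; apply: imset_f.
- move=> f g e _ _ fg /eqP -> /eqP efg0.
  have efg : f = g by rewrite -(imVK f) efg0 imVK.
  by move: fg; rewrite efg eqxx.
- by apply/eqP => /(inv_inj rK).
Qed.

Lemma iso_Ck k V E : in_Ck k V E -> in_Ck k (r @: V) (imE r E).
Proof. by move=> [h1 h2]; split; [apply: iso_crit|apply: iso_lambda]. Qed.
End Iso.

Lemma third_color (a b : nat) : exists g, [/\ g < 3, g != a & g != b].
Proof.
exists (if (a != 0) && (b != 0) then 0 else if (a != 1) && (b != 1) then 1 else 2).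
by case: a => [|[|a]]; case: b => [|[|b]].
Qed.

Lemma nonmono_im (h : T -> T) c (g : {set T}) : nonmono c (h @: g) -> nonmono (c \o h) g.
Proof.
move=> [x [y [/imsetP [x' hx ->] /imsetP [y' hy ->] hxy]]]; by exists x', y'.
Qed.

End General.



Section Hajos.
Variables (T : finType) (V1 V2 : {set T}) (E1 E2 : {set {set T}})
  (v1 v2 : T) (e1 e2 : {set T}) (b : bool).
Hypotheses (H1 : is_hypergraph V1 E1) (H2 : is_hypergraph V2 E2)
  (Hd : [disjoint V1 & V2]) (he1 : e1 \in E1) (hv1 : v1 \in e1)
  (he2 : e2 \in E2) (hv2 : v2 \in e2).

Implicit Types (f g : {set T}).
Local Notation m := (Defs.merge v1 v2).
Local Notation A := (E1 :\ e1).
Local Notation Bs := [set Defs.merge v1 v2 @: (e : {set T}) | e in E2 :\ e2].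
Local Notation es := (hajos_estar e1 e2 v1 v2 b).
Local Notation V := (hajos_V V1 V2 v1 v2).
Local Notation E := (hajos_E E1 E2 v1 e1 v2 e2 b).

Lemma e1V1 : e1 \subset V1. Proof. by case: (H1 he1). Qed.
Lemma e2V2 : e2 \subset V2. Proof. by case: (H2 he2). Qed.
Lemma v1V1 : v1 \in V1. Proof. exact: (subsetP e1V1). Qed.
Lemma v2V2 : v2 \in V2. Proof. exact: (subsetP e2V2). Qed.
Lemma nV2 x : x \in V1 -> (x \in V2) = false.
Proof. by move=> h; apply: (disjointFr Hd). Qed.
Lemma nV1 x : x \in V2 -> (x \in V1) = false.
Proof. by move=> h; apply: (disjointFl Hd). Qed.
Lemma v1v2 : (v1 == v2) = false.
Proof. by apply/eqP => e; have := nV2 v1V1; rewrite e v2V2. Qed.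
Lemma v2v1 : (v2 == v1) = false.
Proof. by rewrite eq_sym v1v2. Qed.

Lemma memV x : (x \in V) = (x != v2) && ((x \in V1) || (x \in V2)).
Proof. by rewrite /hajos_V !inE. Qed.

Lemma V1V x : x \in V1 -> x \in V.
Proof.
move=> h; rewrite memV h andbT; apply/eqP => e; move: h; by rewrite e (nV1 v2V2).
Qed.

Lemma memE f : (f \in E) = [|| f \in A, f \in Bs | f == es].
Proof. by rewrite /hajos_E !in_setU in_set1 orbA. Qed.

Lemma mv2 : m v2 = v1. Proof. by rewrite /Defs.merge eqxx. Qed.
Lemma mD z : z != v2 -> m z = z. Proof. by rewrite /Defs.merge => /negbTE ->. Qed.

Lemma mV z : z \in V2 -> m z \in V.
Proof.
move=> h; case: (z =P v2) => [->|/eqP nz]; first by rewrite mv2; apply: V1V; apply: v1V1.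
by rewrite mD // memV nz h orbT.
Qed.

Lemma mem_es x : (x \in es) = (((x \in e1) || (x \in e2)) && (x != v1) && (x != v2)) || (b && (x == v1)).
Proof.
rewrite /hajos_estar; case: b; rewrite !inE; last by rewrite !orbF; case: (x \in e1); case: (x \in e2);
  case: (x == v1); case: (x == v2).
by case: (x \in e1); case: (x \in e2); case: (x == v1); case: (x == v2).
Qed.

Lemma es1 x : x \in e1 -> x != v1 -> x \in es.
Proof.
move=> h n; rewrite mem_es h n /=; apply/orP; left; apply/eqP => e.
by have := nV2 (subsetP e1V1 _ h); rewrite e v2V2.
Qed.

Lemma es2 x : x \in e2 -> x != v2 -> x \in es.
Proof.
move=> h n; rewrite mem_es h n orbT andbT /=; apply/orP; left; apply/eqP => e.
by have := nV1 (subsetP e2V2 _ h); rewrite e v1V1.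
Qed.

Lemma es_cases x : x \in es -> [\/ (x \in e1) && (x != v1), (x \in e2) && (x != v2) | x = v1].
Proof.
rewrite mem_es => /orP [/andP [/andP [/orP [h|h] n1] n2]|/andP [_ /eqP ->]].
- by constructor 1; rewrite h n1.
- by constructor 2; rewrite h n2.
- by constructor 3.
Qed.

Lemma e1_other : exists2 x, x \in e1 & x != v1.
Proof. by have [_ c] := H1 he1; apply: exists_other. Qed.
Lemma e2_other : exists2 y, y \in e2 & y != v2.
Proof. by have [_ c] := H2 he2; apply: exists_other. Qed.

Lemma Bs_notV1 f : f \in Bs -> ~~ (f \subset V1).
Proof.
case/imsetP => g; rewrite !inE => /andP [_ gE] ->.
have [gV g2] := H2 gE.
have [z zg zv] : exists2 z, z \in g & z != v2.
  have [w wg] : exists w, w \in g by apply/set0Pn; rewrite -card_gt0; lia.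
  case: (w =P v2) => [ew|/eqP nw]; last by exists w.
  by apply: exists_other; rewrite // -ew.
apply/negP => /subsetP /(_ (m z) (imset_f _ zg)).
by rewrite mD // nV1 // (subsetP gV).
Qed.

Lemma es_notV1 : ~~ (es \subset V1).
Proof.
case: e2_other => y y2 yv; apply/negP => /subsetP /(_ y (es2 y2 yv)).
by rewrite nV1 // (subsetP e2V2).
Qed.

Lemma hyp_G : is_hypergraph V E.
Proof.
move=> f; rewrite memE => /or3P [|/imsetP [g]|/eqP ->].
- rewrite !inE => /andP [_ /H1 [fV f2]]; split=> //.
  by apply/subsetP => x /(subsetP fV); apply: V1V.
- rewrite !inE => /andP [_ /H2 [gV g2]] ->; split.
    apply/subsetP => x /imsetP [z zg ->]; apply: mV; exact: (subsetP gV).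
  rewrite card_in_imset //.
  move=> x y /(subsetP gV) xV /(subsetP gV) yV.
  case: (x =P v2) => [->|/eqP nx]; case: (y =P v2) => [->|/eqP ny] //.
  + by rewrite mv2 (mD ny) => e; move: (nV1 yV); rewrite -e v1V1.
  + by rewrite mv2 (mD nx) => e; move: (nV1 xV); rewrite e v1V1.
  + by rewrite (mD nx) (mD ny).
- split.
    apply/subsetP => x /es_cases [/andP [h _]|/andP [h n]|->].
    + by apply: V1V; apply: (subsetP e1V1).
    + by rewrite memV n (subsetP e2V2) ?orbT.
    + by apply: V1V; apply: v1V1.
  case: e1_other => x x1 xv; case: e2_other => y y2 yv.
  rewrite (cardsD1 x) (es1 x1 xv) (cardsD1 y) in_setD1 (es2 y2 yv) andbT.
  have -> : y != x.
    by apply/eqP => e; have := nV1 (subsetP e2V2 _ y2); rewrite e (subsetP e1V1).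
  by [].
Qed.

Definition comb (c1 c2 : T -> nat) z := if z \in V1 then c1 z else c2 z.

Lemma comb_ok K c1 c2 : (forall x, x \in V1 -> c1 x < K) -> (forall x, x \in V2 -> c2 x < K) ->
  c1 v1 = c2 v2 ->
  [/\ forall x, x \in V -> comb c1 c2 x < K,
      forall f, f \subset V1 -> nonmono c1 f -> nonmono (comb c1 c2) f,
      forall g, g \subset V2 -> nonmono c2 g -> nonmono (comb c1 c2) (m @: g) &
      forall x y, x \in e1 -> x != v1 -> y \in e2 -> y != v2 -> c1 x <> c2 y ->
        nonmono (comb c1 c2) es].
Proof.
move=> hc1 hc2 e12.
have cm : forall z, z \in V2 -> comb c1 c2 (m z) = c2 z.
  move=> z zV; rewrite /comb; case: (z =P v2) => [->|/eqP nz].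
    by rewrite mv2 v1V1.
  by rewrite mD // nV1.
split.
- move=> x; rewrite memV /comb => /andP [_ /orP [h|h]]; first by rewrite h; apply: hc1.
  by rewrite nV1 //; apply: hc2.
- move=> f /subsetP fV [x [y [hx hy hxy]]]; exists x, y; split=> //.
  by rewrite /comb (fV x hx) (fV y hy).
- move=> g /subsetP gV [x [y [hx hy hxy]]]; exists (m x), (m y); split; try exact: imset_f.
  by rewrite !cm ?gV.
- move=> x y x1 xv y2 yv nxy; exists x, y; split; [exact: es1|exact: es2|].
  by rewrite /comb (subsetP e1V1 _ x1) nV1 // (subsetP e2V2).
Qed.

Lemma JOIN K c1 c2 : 3 <= K ->
  (forall x, x \in V1 -> c1 x < K) -> (forall x, x \in V2 -> c2 x < K) ->
  nonmono c1 e1 \/ nonmono c2 e2 ->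
  exists c, [/\ forall x, x \in V -> c x < K, nonmono c es,
      forall f, f \subset V1 -> nonmono c1 f -> nonmono c f &
      forall g, g \subset V2 -> nonmono c2 g -> nonmono c (m @: g)].
Proof.
move=> K3 hc1 hc2 hnm.
set al := c1 v1.
have alK : al < K by apply: hc1; apply: v1V1.
set c2a := sw (c2 v2) al \o c2.
have c2aK : forall x, x \in V2 -> c2a x < K.
  by move=> x xV; apply: sw_lt => //; apply: hc2 => //; apply: v2V2.
have c2av : c2a v2 = al by rewrite /c2a /= swL.
have [x [y [x1 xv y2 yv hor]]] : exists x y, [/\ x \in e1, x != v1, y \in e2, y != v2 &
    (c1 x != al) || (c2a y != al)].
  case: hnm => [nm|nm].
    case: (nonmono_other nm hv1) => x x1 xne; case: e2_other => y y2 yv.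
    have h : c1 x != al by apply/eqP.
    have xv : x != v1 by apply/eqP => e; apply: xne; rewrite e.
    by exists x, y; rewrite h.
  have nm' : nonmono c2a e2 by apply: nonmono_comp => //; apply: sw_inj.
  case: (nonmono_other nm' hv2) => y y2 yne; case: e1_other => x x1 xv.
  have h : c2a y != al by rewrite -c2av; apply/eqP.
  have yv : y != v2 by apply/eqP => e; apply: yne; rewrite e.
  by exists x, y; rewrite h orbT.
have fin : forall c2', (forall z, z \in V2 -> c2' z < K) -> c1 v1 = c2' v2 ->
    (forall g, nonmono c2 g -> nonmono c2' g) -> c1 x <> c2' y ->
    exists c, [/\ forall x, x \in V -> c x < K, nonmono c es,
      forall f, f \subset V1 -> nonmono c1 f -> nonmono c f &
      forall g, g \subset V2 -> nonmono c2 g -> nonmono c (m @: g)].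
  move=> c2' h1 h2 h3 h4; have [k1 k2 k3 k4] := comb_ok hc1 h1 h2.
  exists (comb c1 c2'); split=> //; first exact: (k4 x y).
  by move=> g gV /h3; apply: k3.
have c2anm : forall g, nonmono c2 g -> nonmono c2a g.
  by move=> g; apply: nonmono_comp; apply: sw_inj.
case: (c1 x =P c2a y) => [exy|nxy]; last by apply: (fin c2a).
set be := c1 x.
have bal : be != al by move: hor; rewrite /be exy orbb.
case: (third_color al be) => g [g3 gal gbe].
apply: (fin (sw be g \o c2a)).
- move=> z zV; apply: sw_lt; [rewrite /be; apply: hc1; exact: (subsetP e1V1)|lia|exact: c2aK].
- by rewrite /= c2av swD // eq_sym.
- by move=> h /c2anm; apply: nonmono_comp; apply: sw_inj.
- by rewrite /= -exy swL => e; move: gbe; rewrite -e eqxx.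
Qed.

Section Rdir.
Variable k : nat.
Hypothesis hk : 3 <= k.
Hypotheses (C1 : in_Ck k V1 E1) (C2 : in_Ck k V2 E2).

Lemma AE f : f \in A -> f \in E. Proof. by move=> h; rewrite memE h. Qed.
Lemma BE g : g \in E2 :\ e2 -> m @: g \in E.
Proof. by move=> h; rewrite memE (imset_f _ h) orbT. Qed.
Lemma esE : es \in E. Proof. by rewrite memE eqxx !orbT. Qed.
Lemma A_V1 f : f \in A -> f \subset V1.
Proof. by rewrite !inE => /andP [_ /H1 []]. Qed.
Lemma B_V2 g : g \in E2 :\ e2 -> g \subset V2.
Proof. by rewrite !inE => /andP [_ /H2 []]. Qed.

Lemma R_nc : ~ colorable V E k.
Proof.
move=> [c [hc hce]].
have [cr1 _] := C1; have [cr2 _] := C2.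
move/critical_iff: cr1 => [_ nc1 _]; move/critical_iff: cr2 => [_ nc2 _].
have m1 : ~ nonmono c e1.
  move=> nm; apply: nc1; exists c; split; first by move=> x /V1V; apply: hc.
  move=> f fE; case: (f =P e1) => [->//|/eqP fe]; apply: hce; apply: AE; by rewrite !inE fe.
have m2 : ~ nonmono (c \o m) e2.
  move=> nm; apply: nc2; exists (c \o m); split; first by move=> x /mV; apply: hc.
  move=> g gE; case: (g =P e2) => [->//|/eqP ge]; apply: nonmono_im; apply: hce; apply: BE.
  by rewrite !inE ge.
have allv : forall x, x \in es -> c x = c v1.
  move=> x /es_cases [/andP [x1 _]|/andP [x2 xv]|->//].
  - exact: mono_all m1 hv1 x x1.
  - have := mono_all m2 hv2 x2; by rewrite /= mD // mv2.
case: (hce _ esE) => x [y [hx hy]]; by rewrite (allv x hx) (allv y hy).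
Qed.

Lemma join_col K c1 c2 (D : {set {set T}}) : D \subset E -> 3 <= K ->
  (forall x, x \in V1 -> c1 x < K) -> (forall x, x \in V2 -> c2 x < K) ->
  nonmono c1 e1 \/ nonmono c2 e2 ->
  (forall f, f \in A -> f \in D -> nonmono c1 f) ->
  (forall g, g \in E2 :\ e2 -> m @: g \in D -> nonmono c2 g) -> colorable V D K.
Proof.
move=> /subsetP DE K3 h1 h2 hn hA hB.
case: (JOIN K3 h1 h2 hn) => c [k1 k2 k3 k4]; exists c; split=> // h hD.
move: (DE h hD); rewrite memE => /or3P [hA'|/imsetP [g gE ehg]|/eqP ->] //.
- by apply: k3; [apply: A_V1|apply: hA].
- by rewrite ehg; apply: k4; [apply: B_V2|apply: hB; rewrite -?ehg].
Qed.

Lemma R_col1 : colorable V E k.+1.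
Proof.
have [/critical_iff [[c1 [hc1 hce1]] _ _] _] := C1.
have [/critical_iff [[c2 [hc2 hce2]] _ _] _] := C2.
apply: (join_col (c1 := c1) (c2 := c2) (subxx _)) => //; first lia.
- by left; apply: hce1.
- by move=> f; rewrite !inE => /andP [_ /hce1].
- by move=> g; rewrite !inE => /andP [_ /hce2].
Qed.

Lemma R_del f : f \in E -> colorable V (E :\ f) k.
Proof.
have [cr1 _] := C1; have [cr2 _] := C2.
have k2 : 2 <= k by lia.
rewrite memE => /or3P [fA|/imsetP [g0 g0E ->]|/eqP ->].
- have fE1 : f \in E1 by move: fA; rewrite !inE => /andP [].
  have fe1 : f != e1 by move: fA; rewrite !inE => /andP [].
  have [c1 [hc1 hce1]] := crit_del cr1 H1 fE1.
  have [c2 [hc2 hce2]] := crit_del cr2 H2 he2.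
  apply: (join_col (c1 := c1) (c2 := c2) (subD1set _ _)) => //.
  - by left; apply: hce1; rewrite !inE eq_sym fe1.
  - move=> h; rewrite !inE => /andP [_ hE1] /andP [hf _]; apply: hce1; by rewrite !inE hf.
  - by move=> g /hce2.
- have g0E2 : g0 \in E2 by move: g0E; rewrite !inE => /andP [].
  have g0e2 : g0 != e2 by move: g0E; rewrite !inE => /andP [].
  have [c1 [hc1 hce1]] := crit_del cr1 H1 he1.
  have [c2 [hc2 hce2]] := crit_del cr2 H2 g0E2.
  apply: (join_col (c1 := c1) (c2 := c2) (subD1set _ _)) => //.
  - by right; apply: hce2; rewrite !inE eq_sym g0e2.
  - by move=> h /hce1.
  - move=> g; rewrite !inE => /andP [_ gE2] /andP [hg _]; apply: hce2; rewrite !inE gE2 andbT.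
    by apply/eqP => e; move: hg; rewrite e eqxx.
- have [c1 [hc1 hce1]] := crit_del cr1 H1 he1.
  have [c2 [hc2 hce2]] := crit_del cr2 H2 he2.
  set c2' := sw (c2 v2) (c1 v1) \o c2.
  have hc2' : forall x, x \in V2 -> c2' x < k.
    move=> x xV; apply: sw_lt; [apply: hc2; exact: v2V2|apply: hc1; exact: v1V1|exact: hc2].
  have e12 : c1 v1 = c2' v2 by rewrite /c2' /= swL.
  have [k1 k2' k3 _] := comb_ok hc1 hc2' e12.
  exists (comb c1 c2'); split=> // h; rewrite in_setD1 => /andP [hne].
  rewrite memE => /or3P [hA|/imsetP [g gE ->]|/eqP e] //; last by move: hne; rewrite e eqxx.
  + by apply: k2'; [apply: A_V1|apply: hce1].
  + apply: k3; first exact: B_V2.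
    by apply: nonmono_comp; [apply: sw_inj|apply: hce2].
Qed.

Lemma R_cover z : z \in V -> exists2 f, f \in E & z \in f.
Proof.
have [cr1 _] := C1; have [cr2 _] := C2.
rewrite memV => /andP [zv2 /orP [zV|zV]].
- case: (z =P v1) => [->|/eqP zv1].
    case: (crit_other cr1 H1 _ he1 hv1) => [|f fA vf]; first lia.
    by exists f => //; apply: AE.
  case: (crit_cover cr1 H1 _ zV) => [|f fE zf]; first lia.
  case: (f =P e1) => [ef|/eqP fe]; first by exists es; [apply: esE|apply: es1; rewrite -?ef].
  by exists f => //; apply: AE; rewrite !inE fe.
- case: (crit_cover cr2 H2 _ zV) => [|g gE zg]; first lia.
  case: (g =P e2) => [eg|/eqP ge]; first by exists es; [apply: esE|apply: es2; rewrite -?eg].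
  exists (m @: g); first by apply: BE; rewrite !inE ge.
  by rewrite -(mD zv2); apply: imset_f.
Qed.

Lemma R_crit : critical V E k.
Proof.
apply/critical_iff; split; [exact: R_col1|exact: R_nc|].
move=> V' E' [hyp sV sE ne].
case: (classic (exists2 f, f \in E & f \notin E')) => [[f fE fn]|nf].
  apply: colorable_sub (R_del fE) sV _.
  apply/subsetP => h hE'; rewrite in_setD1 (subsetP sE _ hE') andbT.
  by apply/eqP => e; move: fn; rewrite -e hE'.
exfalso.
have eE : E' = E.
  apply/eqP; rewrite eqEsubset sE; apply/subsetP => f fE.
  by case: (boolP (f \in E')) => // fn; case: nf; exists f.
have : ~~ (V \subset V').
  apply/negP => sV'; apply: ne; rewrite eE; congr pair.
  by apply/eqP; rewrite eqEsubset sV sV'.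
case/subsetPn => z zV zn.
case: (R_cover zV) => f fE zf.
rewrite -eE in fE; have [fV _] := hyp f fE.
by move: zn; rewrite (subsetP fV _ zf).
Qed.

Definition pi1 z := if z \in V2 then v1 else z.
Definition pi2 z := if z \in V1 then v2 else z.

Lemma pi1V1 z : z \in V1 -> pi1 z = z. Proof. by move=> h; rewrite /pi1 nV2. Qed.
Lemma pi2V2 z : z \in V2 -> pi2 z = z. Proof. by move=> h; rewrite /pi2 nV1. Qed.

Lemma pi2m g : g \subset V2 -> pi2 @: (m @: g) = g.
Proof.
move=> /subsetP gV; rewrite -imset_comp -[RHS]imset_id; apply: eq_in_imset => z zg /=.
case: (z =P v2) => [->|/eqP nz]; first by rewrite mv2 /pi2 v1V1.
by rewrite mD // pi2V2 // gV.
Qed.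

Lemma R_lambda : lambda_le V E k.
Proof.
have [_ l1] := C1; have [_ l2] := C2.
move=> x y xV yV nxy n hd.
case: (boolP (pi1 x == pi1 y)) => [/eqP e1xy|n1].
  have n2 : pi2 x != pi2 y.
    move: xV yV e1xy; rewrite !memV /pi1 /pi2.
    case xV2: (x \in V2); case yV2: (y \in V2); rewrite /= ?orbF ?orbT ?andbT.
    - by rewrite (nV1 xV2) (nV1 yV2) => _ _ _; apply/eqP.
    - move=> xv2 /andP [_ yV1] eyy; rewrite (nV1 xV2) -eyy v1V1; exact: xv2.
    - move=> /andP [_ xV1] yv2 exx; rewrite (nV1 yV2) exx v1V1 eq_sym; exact: yv2.
    - by move=> /andP [_ xV1] /andP [_ yV1] exy; move: nxy; rewrite exy eqxx.
  have hd2 := @transfer _ E E2 pi2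
    (fun f e => ((f \in Bs) && (e == pi2 @: f)) || ((f == es) && (e == e2))) x y _ _ _ n2 n hd.
  have px : pi2 x \in V2.
    move: xV; rewrite memV /pi2 => /andP [_ /orP [h|h]]; first by rewrite h; apply: v2V2.
    by rewrite nV1.
  have py : pi2 y \in V2.
    move: yV; rewrite memV /pi2 => /andP [_ /orP [h|h]]; first by rewrite h; apply: v2V2.
    by rewrite nV1.
  apply: (l2 _ _ px py (elimN eqP n2)).
  - apply: hd2.
    + move=> f _ e /orP [/andP [/imsetP [g gE ->] /eqP ->]|/andP [_ /eqP ->] //].
      by rewrite pi2m ?B_V2 //; move: gE; rewrite !inE => /andP [].
    + move=> f; rewrite memE => /or3P [fA|fB|/eqP ->] u u' hu hu'.
      * have /subsetP fV := A_V1 fA.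
        by rewrite /pi2 (fV _ hu) (fV _ hu') connect0.
      * by apply: (crel1 (e := pi2 @: f)); rewrite ?fB ?eqxx //; apply: imset_f.
      * apply: (crel1 (e := e2)); rewrite ?eqxx ?orbT //.
        -- case/es_cases: hu => [/andP [h _]|/andP [h hn]|->].
           ++ by rewrite /pi2 (subsetP e1V1 _ h).
           ++ by rewrite pi2V2 // (subsetP e2V2).
           ++ by rewrite /pi2 v1V1.
        -- case/es_cases: hu' => [/andP [h _]|/andP [h hn]|->].
           ++ by rewrite /pi2 (subsetP e1V1 _ h).
           ++ by rewrite pi2V2 // (subsetP e2V2).
           ++ by rewrite /pi2 v1V1.
    + move=> f g e _ _ fg.
      move=> /orP [/andP [/imsetP [g1 g1E ef] /eqP ->]|/andP [/eqP ef /eqP ->]];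
      move=> /orP [/andP [/imsetP [g2 g2E eg] /eqP e']|/andP [/eqP eg /eqP e']].
      * move: e'; rewrite ef eg !pi2m ?B_V2 // => eg12; move: fg; by rewrite ef eg eg12 eqxx.
      * move: e'; rewrite ef pi2m ?B_V2 // => eg1; move: g1E; by rewrite eg1 !inE eqxx.
      * move: e'; rewrite eg pi2m ?B_V2 // => eg2; move: g2E; by rewrite -eg2 !inE eqxx.
      * by move: fg; rewrite ef eg eqxx.
have hd1 := @transfer _ E E1 pi1
  (fun f e => ((f \in A) && (e == f)) || ((f == es) && (e == e1))) x y _ _ _ n1 n hd.
have px : pi1 x \in V1.
  move: xV; rewrite memV /pi1 => /andP [_ /orP [h|h]]; last by rewrite h; apply: v1V1.
  by rewrite nV2.
have py : pi1 y \in V1.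
  move: yV; rewrite memV /pi1 => /andP [_ /orP [h|h]]; last by rewrite h; apply: v1V1.
  by rewrite nV2.
apply: (l1 _ _ px py (elimN eqP n1)).
- apply: hd1.
  + move=> f _ e /orP [/andP [fA /eqP ->]|/andP [_ /eqP ->] //].
    by move: fA; rewrite !inE => /andP [].
  + move=> f; rewrite memE => /or3P [fA|/imsetP [g gE ->]|/eqP ->] u u' hu hu'.
    * have /subsetP fV := A_V1 fA.
      by apply: (crel1 (e := f)); rewrite ?fA ?eqxx // pi1V1 ?fV.
    * have hv : forall w, w \in m @: g -> pi1 w = v1.
        move=> w /imsetP [z zg ->]; case: (z =P v2) => [->|/eqP nz].
          by rewrite mv2 /pi1; case: ifP.
        by rewrite mD // /pi1 (subsetP (B_V2 gE)).
      by rewrite (hv _ hu) (hv _ hu') connect0.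
    * have hv : forall w, w \in es -> pi1 w \in e1.
        move=> w /es_cases [/andP [h _]|/andP [h hn]|->].
        -- by rewrite pi1V1 // (subsetP e1V1).
        -- by rewrite /pi1 (subsetP e2V2).
        -- by rewrite /pi1; case: ifP.
      by apply: (crel1 (e := e1)); rewrite ?eqxx ?orbT ?hv.
  + move=> f g e _ _ fg.
    move=> /orP [/andP [fA /eqP ef]|/andP [/eqP ef /eqP ee]];
    move=> /orP [/andP [gA /eqP eg]|/andP [/eqP eg /eqP ee']].
    * by move: fg; rewrite -ef -eg eqxx.
    * by move: fA; rewrite -ef ee' !inE eqxx.
    * by move: gA; rewrite -eg ee !inE eqxx.
    * by move: fg; rewrite ef eg eqxx.
Qed.

Lemma R_Ck : in_Ck k V E.
Proof. split; [exact: R_crit|exact: R_lambda]. Qed.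

End Rdir.

Lemma es_notB f : f \in Bs -> f != es.
Proof.
case/imsetP => g; rewrite !inE => /andP [_ gE] ->.
have /subsetP gV := (let: conj a _ := H2 gE in a).
case: e1_other => x x1 xv; apply/eqP => e.
have : x \in es by apply: es1.
rewrite -e => /imsetP [z zg ex]; case: (z =P v2) => [ez|/eqP nz].
  by move: xv; rewrite ex ez mv2 eqxx.
by move: ex; rewrite mD // => ex; have := nV1 (gV _ zg); rewrite -ex (subsetP e1V1).
Qed.

Lemma A_notes f : f \in A -> f != es.
Proof. by move=> fA; apply/eqP => e; move: es_notV1; rewrite -e A_V1. Qed.

Lemma extract K : ~ colorable V2 E2 K -> colorable V E K -> colorable V1 E1 K.
Proof.
move=> nc2 [c [hc hce]]; exists c; split; first by move=> x /V1V; apply: hc.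
move=> f fE; case: (f =P e1) => [->|/eqP fe]; last by apply: hce; apply: AE; rewrite !inE fe.
case: (classic (nonmono c e1)) => // m1; exfalso.
have m2 : ~ nonmono (c \o m) e2.
  move=> nm; apply: nc2; exists (c \o m); split; first by move=> x /mV; apply: hc.
  move=> g gE; case: (g =P e2) => [->//|/eqP ge]; apply: nonmono_im; apply: hce; apply: BE.
  by rewrite !inE ge.
have allv : forall x, x \in es -> c x = c v1.
  move=> x /es_cases [/andP [x1 _]|/andP [x2 xv]|->//].
  - exact: mono_all m1 hv1 x x1.
  - have := mono_all m2 hv2 x2; by rewrite /= mD // mv2.
case: (hce _ esE) => x [y [hx hy]]; by rewrite (allv x hx) (allv y hy).
Qed.

Section Ldir.
Variable k : nat.
Hypothesis hk : 3 <= k.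
Hypothesis CG : in_Ck k V E.

Lemma L_c0 : colorable V (E :\ es) k.
Proof. by have [cr _] := CG; apply: crit_del cr hyp_G esE. Qed.

Lemma L_c0B : colorable V2 (E2 :\ e2) k.
Proof.
have [c0 [hc0 hce0]] := L_c0; exists (c0 \o m); split; first by move=> x /mV; apply: hc0.
move=> g gE; apply: nonmono_im; apply: hce0.
by rewrite in_setD1 BE // es_notB // imset_f.
Qed.

Lemma L_c0A : colorable V1 A k.
Proof.
have [c0 [hc0 hce0]] := L_c0; exists c0; split; first by move=> x /V1V; apply: hc0.
move=> f fA; apply: hce0; by rewrite in_setD1 AE // A_notes.
Qed.

Lemma La : ~ colorable V1 E1 k.
Proof.
move=> [c1 [hc1 hce1]].
have [c2 [hc2 hce2]] := L_c0B.
have [/critical_iff [_ nc _] _] := CG; apply: nc.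
apply: (join_col (c1 := c1) (c2 := c2) (subxx _)) => //.
- by left; apply: hce1.
- by move=> f; rewrite !inE => /andP [_ /hce1].
- by move=> g /hce2.
Qed.

Lemma Lb : colorable V1 E1 k.+1.
Proof.
have [c0 [hc0 hce0]] := L_c0A.
exists (fun z => if z == v1 then k else c0 z); split.
  by move=> x xV; case: ifP => // _; have := hc0 x xV; lia.
move=> f fE; case: (f =P e1) => [->|/eqP fe].
  case: e1_other => x x1 xv; exists v1, x; split=> //.
  rewrite eqxx (negbTE xv); have := hc0 x (subsetP e1V1 _ x1); lia.
have fA : f \in A by rewrite !inE fe.
have /subsetP fV := A_V1 fA.
case: (hce0 f fA) => x [y [hx hy hxy]]; exists x, y; split=> //.
case: (x =P v1) => [ex|nx]; case: (y =P v1) => [ey|ny].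
- by move: hxy; rewrite ex ey.
- have := hc0 y (fV _ hy); lia.
- have := hc0 x (fV _ hx); lia.
- exact: hxy.
Qed.

Lemma L_noe1 V' E' : Defs.proper_sub V' E' V1 E1 -> e1 \notin E' -> colorable V' E' k.
Proof.
move=> [_ sV sE _] ne; apply: colorable_sub L_c0A sV _.
apply/subsetP => f fE'; rewrite in_setD1 (subsetP sE _ fE') andbT.
by apply/eqP => e; move: ne; rewrite -e fE'.
Qed.

Lemma L_lambda : ~ colorable V2 E2 k -> lambda_le V1 E1 k.
Proof.
move=> nc2.
have [y0 /andP [y02 y0v] cy0] := conn_other H2 (ltnW hk) he2 hv2 nc2 L_c0B.
have [_ lG] := CG.
move=> x y xV yV nxy n hd.
set F := fun f e => ((f \in A) && (e == f)) || ((f == e1) && ((e == es) || (e \in Bs))).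
have hd' := @transfer _ E1 E (fun z => z) F x y _ _ _ _ n hd.
apply: (lG x y (V1V xV) (V1V yV) nxy); apply: hd'.
- move=> f _ e /orP [/andP [fA /eqP ->]|/andP [_ /orP [/eqP ->|eB]]].
  + exact: AE.
  + exact: esE.
  + by rewrite memE eB orbT.
- move=> f fE u u' hu hu'.
  case: (f =P e1) => [ef|/eqP fe]; last first.
    by apply: (crel1 (e := f)) => //; rewrite /F !inE fe fE eqxx.
  have key : forall u, u \in e1 -> connect (crel (F f)) u y0.
    move=> w w1; case: (w =P v1) => [->|/eqP wv].
      have := connect_img (f := m) (R' := crel (F f)) _ cy0.
      rewrite mv2 mD //; apply.
      move=> a a' /existsP [g /and3P [gE ha ha']]; apply/existsP; exists (m @: g).
      by rewrite /F ef eqxx (imset_f _ gE) !orbT /= !imset_f.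
    by apply: (crel1 (e := es)); rewrite /F ?ef ?eqxx ?orbT //; [apply: es1|apply: es2].
  rewrite -ef in key.
  apply: connect_trans (key u hu) _.
  by rewrite (sym_connect_sym (crel_sym _)); apply: key.
- move=> f g e fE gE fg.
  move=> /orP [/andP [fA /eqP ef]|/andP [/eqP ef1 he]];
  move=> /orP [/andP [gA /eqP eg]|/andP [/eqP eg1 he']].
  + by move: fg; rewrite -ef -eg eqxx.
  + move: he'; rewrite ef => /orP [/eqP ees|eB].
      by move: (A_notes fA); rewrite ees eqxx.
    by move: (Bs_notV1 eB); rewrite A_V1.
  + move: he; rewrite eg => /orP [/eqP ees|eB].
      by move: (A_notes gA); rewrite ees eqxx.
    by move: (Bs_notV1 eB); rewrite A_V1.
  + by move: fg; rewrite ef1 eg1 eqxx.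
- exact/eqP.
Qed.

End Ldir.

End Hajos.

Lemma join_proper (T : finType) (V1 V2 : {set T}) (E1 E2 : {set {set T}})
  (v1 v2 : T) (e1 e2 : {set T}) (b : bool) V' E' :
  is_hypergraph V1 E1 -> is_hypergraph V2 E2 -> [disjoint V1 & V2] ->
  e1 \in E1 -> v1 \in e1 -> e2 \in E2 -> v2 \in e2 ->
  Defs.proper_sub V' E' V1 E1 -> e1 \in E' ->
  Defs.proper_sub (hajos_V V' V2 v1 v2) (hajos_E E' E2 v1 e1 v2 e2 b)
    (hajos_V V1 V2 v1 v2) (hajos_E E1 E2 v1 e1 v2 e2 b).
Proof.
move=> H1 H2 Hd he1 hv1 he2 hv2 [hyp' sV sE ne] he1'.
have Hd' : [disjoint V' & V2] by apply: disjointWl sV Hd.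
split.
- exact: (hyp_G hyp' H2 Hd' he1' hv1 he2 hv2).
- by rewrite /hajos_V; apply: setSD; apply: setSU.
- by rewrite /hajos_E; apply: setSU; apply: setSU; apply: setSD.
- case=> eV eE; apply: ne.
  have V1V' : V1 \subset V'.
    apply/subsetP => z zV1; have := V1V v1 H2 Hd he2 hv2 zV1.
    rewrite -eV memV => /andP [_ /orP [//|zV2]].
    by move: (disjointFr Hd zV1); rewrite zV2.
  have E1E' : E1 \subset E'.
    apply/subsetP => f fE1; case: (f =P e1) => [->//|/eqP fe].
    have fA : f \in E1 :\ e1 by rewrite !inE fe.
    have [fV _] := H1 f fE1.
    have := AE E2 v1 v2 e2 b fA; rewrite -eE memE => /or3P [|fB|/eqP fes].
    + by rewrite inE => /andP [].
    + by move: (Bs_notV1 H2 Hd he1 hv1 he2 hv2 fB); rewrite fV.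
    + by move: (es_notV1 b H1 H2 Hd he1 hv1 he2 hv2); rewrite -fes fV.
  by congr pair; apply/eqP; rewrite eqEsubset ?sV ?sE.
Qed.

Lemma L_Ck (T : finType) (V1 V2 : {set T}) (E1 E2 : {set {set T}})
  (v1 v2 : T) (e1 e2 : {set T}) (b : bool) k :
  is_hypergraph V1 E1 -> is_hypergraph V2 E2 -> [disjoint V1 & V2] ->
  e1 \in E1 -> v1 \in e1 -> e2 \in E2 -> v2 \in e2 -> 3 <= k ->
  in_Ck k (hajos_V V1 V2 v1 v2) (hajos_E E1 E2 v1 e1 v2 e2 b) ->
  ~ colorable V2 E2 k -> in_Ck k V1 E1.
Proof.
move=> H1 H2 Hd he1 hv1 he2 hv2 hk CG nc2.
split; last exact: (L_lambda H1 H2 Hd he1 hv1 he2 hv2 hk CG nc2).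
apply/critical_iff; split.
- exact: (Lb H1 H2 Hd he1 hv1 he2 hv2 hk CG).
- exact: (La H1 H2 Hd he1 hv1 he2 hv2 hk CG).
move=> V' E' hps; case: (boolP (e1 \in E')) => he1'; last first.
  exact: (L_noe1 H1 H2 Hd he1 hv1 he2 hv2 CG hps he1').
have [cr _] := CG; move/critical_iff: cr => [_ _ h3].
have hcol := h3 _ _ (join_proper b H1 H2 Hd he1 hv1 he2 hv2 hps he1').
case: hps => hyp' sV _ _.
have Hd' : [disjoint V' & V2] by apply: disjointWl sV Hd.
exact: (extract hyp' H2 Hd' he1' hv1 he2 hv2 nc2 hcol).
Qed.

Section Sym.
Variables (T : finType) (V1 V2 : {set T}) (E1 E2 : {set {set T}})
  (v1 v2 : T) (e1 e2 : {set T}) (b : bool).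
Hypotheses (H1 : is_hypergraph V1 E1) (H2 : is_hypergraph V2 E2)
  (Hd : [disjoint V1 & V2]) (he1 : e1 \in E1) (hv1 : v1 \in e1)
  (he2 : e2 \in E2) (hv2 : v2 \in e2).

Definition rho z := if z == v1 then v2 else if z == v2 then v1 else z.

Lemma rhoK : involutive rho.
Proof.
move=> z; rewrite /rho.
case: (z =P v1) => [->|zv1]; first by rewrite eqxx; case: (v2 =P v1) => [->|].
case: (z =P v2) => [->|zv2]; first by rewrite eqxx.
by move/eqP/negbTE: zv1 => ->; move/eqP/negbTE: zv2 => ->.
Qed.

Let v1V1 : v1 \in V1. Proof. by have [s _] := H1 he1; apply: (subsetP s). Qed.
Let v2V2 : v2 \in V2. Proof. by have [s _] := H2 he2; apply: (subsetP s). Qed.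
Let nV2 x : x \in V1 -> (x \in V2) = false. Proof. by move=> h; apply: (disjointFr Hd). Qed.
Let nV1 x : x \in V2 -> (x \in V1) = false. Proof. by move=> h; apply: (disjointFl Hd). Qed.
Let v1v2 : (v1 == v2) = false.
Proof. by apply/eqP => e; have := nV2 v1V1; rewrite e v2V2. Qed.

Lemma rho_V : rho @: hajos_V V1 V2 v1 v2 = hajos_V V2 V1 v2 v1.
Proof.
apply/setP => z; rewrite mem_imset_inv; last exact: rhoK.
rewrite /rho !memV.
case: (z =P v1) => [->|/eqP zv1]; first by rewrite eqxx.
case: (z =P v2) => [->|/eqP zv2]; first by rewrite v1v2 v1V1 /= v2V2.
by rewrite zv2 orbC.
Qed.

Lemma rho_E : imE rho (hajos_E E1 E2 v1 e1 v2 e2 b) = hajos_E E2 E1 v2 e2 v1 e1 b.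
Proof.
rewrite /imE /hajos_E !imsetU imset_set1 [_ :|: [set Defs.merge v2 v1 @: _ | _ in _]]setUC.
congr (_ :|: _ :|: _).
- apply: eq_in_imset => e; rewrite !inE => /andP [_ /H1 [/subsetP eV _]].
  apply: eq_in_imset => z ze; rewrite /rho /Defs.merge.
  case: (z =P v1) => // _; case: (z =P v2) => // ez.
  have := nV2 (eV z ze); rewrite ez v2V2; discriminate.
- rewrite -imset_comp -[RHS]imset_id; apply: eq_in_imset => g.
  rewrite !inE => /andP [_ /H2 [/subsetP gV _]] /=.
  rewrite -imset_comp -[RHS]imset_id; apply: eq_in_imset => z zg /=.
  rewrite /rho /Defs.merge; case: (z =P v2) => [->|/eqP zv2]; first by rewrite eqxx.
  have := nV1 (gV _ zg); case: (z =P v1) => [->|]; first by rewrite v1V1.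
  by move=> _ _; rewrite (negbTE zv2).
- congr [set _]; apply/setP => z; rewrite mem_imset_inv; last exact: rhoK.
  rewrite /rho /hajos_estar; case: b; rewrite !inE;
  case: (z =P v1) => [->|/eqP zv1]; rewrite ?eqxx ?v1v2 ?(eq_sym v2 v1) ?v1v2 /=;
  try (case: (z =P v2) => [->|/eqP zv2]; rewrite ?eqxx ?v1v2 ?(eq_sym v2 v1) ?v1v2 /=);
  rewrite ?(negbTE zv1) ?(negbTE zv2) /= ?orbF //; try by rewrite orbC.
Qed.

Lemma sym_Ck k : in_Ck k (hajos_V V1 V2 v1 v2) (hajos_E E1 E2 v1 e1 v2 e2 b) ->
  in_Ck k (hajos_V V2 V1 v2 v1) (hajos_E E2 E1 v2 e2 v1 e1 b).
Proof. by move/(iso_Ck rhoK); rewrite rho_V rho_E. Qed.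
End Sym.

Theorem claim2 (k : nat) (hk : 3 <= k) (T : finType)
  (V1 V2 : {set T}) (E1 E2 : {set {set T}})
  (v1 v2 : T) (e1 e2 : {set T}) (b : bool) :
  is_hypergraph V1 E1 -> is_hypergraph V2 E2 ->
  [disjoint V1 & V2] ->
  e1 \in E1 -> v1 \in e1 -> e2 \in E2 -> v2 \in e2 ->
  in_Ck k (hajos_V V1 V2 v1 v2) (hajos_E E1 E2 v1 e1 v2 e2 b) <->
  in_Ck k V1 E1 /\ in_Ck k V2 E2.
Proof.
move=> H1 H2 Hd he1 hv1 he2 hv2; split.
  move=> CG.
  have CG' : in_Ck k (hajos_V V2 V1 v2 v1) (hajos_E E2 E1 v2 e2 v1 e1 b).
    by apply: sym_Ck CG.
  have Hd' : [disjoint V2 & V1] by rewrite disjoint_sym.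
  have nc1 := La H1 H2 Hd he1 hv1 he2 hv2 hk CG.
  have nc2 := La H2 H1 Hd' he2 hv2 he1 hv1 hk CG'.
  split; [exact: (L_Ck H1 H2 Hd he1 hv1 he2 hv2 hk CG nc2)
         |exact: (L_Ck H2 H1 Hd' he2 hv2 he1 hv1 hk CG' nc1)].
case=> C1 C2; exact: (R_Ck b H1 H2 Hd he1 hv1 he2 hv2 hk C1 C2).
Qed.
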